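(* Let $A$ and $B$ be two $m\times m$ coloring matrices. If $A$ and $B$ are tree coloring equivalent, then $A$ and $B$ have the same number of entries equal to $1$. If $A$ and $B$ are strictly tree coloring equivalent, then for every $1\le i\le m$, row $i$ of $A$ and row $i$ of $B$ contain the same number of ones.
   Context: A plane tree is an unlabeled rooted tree in which the children of every vertex are linearly ordered (left to right). A coloring matrix is an $m\times m$ matrix $A=(a_{ij})$ with entries in $\{0,1\}$. Given $A$, an $A$-coloring of a plane tree assigns to each vertex a color in $\{1,\dots,m\}$ such that whenever a vertex of color $j$ is a child of a vertex of color $i$, we have $a_{ij}=1$. Let $t_A(n)$ be the number of pairs (plane tree with $n$ vertices, $A$-coloring of it), and $t_A^{(i)}(n)$ the number of those in which the root has color $i$. Two $m\times m$ coloring matrices $A,B$ are tree coloring equivalent if $t_A(n)=t_B(n)$ for all $n\ge1$, and strictly tree coloring equivalent if $t_A^{(i)}(n)=t_B^{(i)}(n)$ for all $n\ge1$ and all $1\le i\le m$. *)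

(* Defs.v *)
From mathcomp Require Import all_boot all_algebra.
From Stdlib Require Import List.
Set Implicit Arguments. Unset Strict Implicit. Unset Printing Implicit Defensive.

(* A plane tree whose vertices carry colors in 'I_m: a node has a color and an
   ordered (left-to-right) list of children.  Such a "colored plane tree" is
   exactly a pair (plane tree, coloring of its vertices). *)
Inductive ctree (m : nat) : Type := CNode of 'I_m & list (ctree m).
Arguments CNode {m}.

Definition root_color {m} (t : ctree m) : 'I_m := let: CNode c _ := t in c.

Fixpoint nverts {m} (t : ctree m) : nat :=
  let: CNode _ ch := t in (fold_right (fun c acc => nverts c + acc) 0 ch).+1.

Fixpoint valid {m} (A : 'M[bool]_m) (t : ctree m) : Prop :=
  let: CNode c ch := t in
  fold_right (fun u acc => A c (root_color u) = true /\ valid A u /\ acc) True ch.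

Definition troot_count {m} (A : 'M[bool]_m) (i : 'I_m) (n k : nat) : Prop :=
  exists s : list (ctree m), NoDup s /\ length s = k /\
    forall t, In t s <-> (valid A t /\ nverts t = n /\ root_color t = i).

Definition tcount {m} (A : 'M[bool]_m) (n k : nat) : Prop :=
  exists s : list (ctree m), NoDup s /\ length s = k /\
    forall t, In t s <-> (valid A t /\ nverts t = n).

Definition tree_col_equiv {m} (A B : 'M[bool]_m) : Prop :=
  forall n k, 1 <= n -> (tcount A n k <-> tcount B n k).

Definition strict_tree_col_equiv {m} (A B : 'M[bool]_m) : Prop :=
  forall n k (i : 'I_m), 1 <= n -> (troot_count A i n k <-> troot_count B i n k).

Definition ones {m} (A : 'M[bool]_m) : nat := \sum_(i < m) \sum_(j < m) (A i j : nat).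
Definition row_ones {m} (A : 'M[bool]_m) (i : 'I_m) : nat := \sum_(j < m) (A i j : nat).

(* Main.v *)
From Stdlib Require Import List.
Require Import Defs.
From mathcomp Require Import all_boot all_algebra.

Lemma count_uniq {T : Type} (P : T -> Prop) (s1 s2 : list T) :
  NoDup s1 -> NoDup s2 -> (forall t, In t s1 <-> P t) -> (forall t, In t s2 <-> P t) ->
  length s1 = length s2.
Proof.
move=> n1 n2 h1 h2; apply/anti_leq/andP; split; apply/leP.
- apply: NoDup_incl_length => // x /h1 /h2 //.
- apply: NoDup_incl_length => // x /h2 /h1 //.
Qed.

Lemma In_mem {T : eqType} (x : T) (s : seq T) : In x s <-> x \in s.
Proof.
elim: s => [|y s IH] //=; rewrite in_cons; split.
- by case=> [->|/IH ->]; rewrite ?eqxx ?orbT.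
- by case/orP=> [/eqP ->|/IH]; [left|right].
Qed.

Lemma uniq_NoDup {T : eqType} (s : seq T) : uniq s -> NoDup s.
Proof.
elim: s => [|y s IH] /=; first by constructor.
by case/andP=> hy hs; constructor; [move/In_mem; rewrite (negbTE hy)|exact: IH].
Qed.

Lemma NoDup_mapf {T U : Type} (f : T -> U) (s : list T) :
  (forall x y, f x = f y -> x = y) -> NoDup s -> NoDup (List.map f s).
Proof.
move=> inj; elim: s => [|y s IH] /=; first by constructor.
move=> h; inversion h; subst; constructor; last exact: IH.
by case/List.in_map_iff=> x [/inj -> ].
Qed.

Lemma length_size {T : Type} (s : list T) : length s = size s.
Proof. by elim: s => //= x s ->. Qed.

Definition mk2 {m} (p : 'I_m * 'I_m) : ctree m := CNode p.1 [:: CNode p.2 [::]].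

Lemma mk2_inj {m} (p q : 'I_m * 'I_m) : mk2 p = mk2 q -> p = q.
Proof. by case: p q => [a b] [c d] [-> ->]. Qed.

Lemma two_vert {m} (A : 'M[bool]_m) (t : ctree m) :
  valid A t /\ nverts t = 2 <-> exists p, A p.1 p.2 /\ t = mk2 p.
Proof.
split.
- case: t => c [|[j chu] [|u ch']] //=.
  + by case.
  + case: chu => [|w chu] /=.
    * by case=> [[h _] _]; exists (c, j).
    * by case=> _; case: w => ? ? /=; move/eqP; rewrite addn0 addSn.
  + by case=> _; case: u => ? ? /=; move/eqP; rewrite addSn addnS.
- case=> [[a b] /= [h ->]] /=; by do !split.
Qed.

Lemma tcount2 {m} (A : 'M[bool]_m) : tcount A 2 (ones A).
Proof.
exists (List.map mk2 [seq p <- enum {: 'I_m * 'I_m} | A p.1 p.2]); split; [|split].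
- apply: NoDup_mapf; first exact: mk2_inj.
  by apply: uniq_NoDup; rewrite filter_uniq // enum_uniq.
- rewrite List.length_map length_size size_filter /ones pair_big /=.
  rewrite -sum1_count big_mkcond /= big_enum /=.
  by apply: eq_bigr => p _; case: (A p.1 p.2).
- move=> t; rewrite two_vert; split.
  + by case/List.in_map_iff=> p [<- /In_mem]; rewrite mem_filter => /andP [h _]; exists p.
  + case=> p [h ->]; apply: List.in_map; apply/In_mem; by rewrite mem_filter h mem_enum.
Qed.

Lemma trcount2 {m} (A : 'M[bool]_m) i : troot_count A i 2 (row_ones A i).
Proof.
exists (List.map (fun j => mk2 (i, j)) [seq j <- enum 'I_m | A i j]); split; [|split].
- apply: NoDup_mapf; first by move=> x y /mk2_inj [].
  by apply: uniq_NoDup; rewrite filter_uniq // enum_uniq.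
- rewrite List.length_map length_size size_filter /row_ones.
  rewrite -sum1_count big_mkcond /= big_enum /=.
  by apply: eq_bigr => p _; case: (A i p).
- move=> t; rewrite -and_assoc two_vert; split.
  + case/List.in_map_iff=> j [<- /In_mem]; rewrite mem_filter => /andP [h _].
    by split=> //; exists (i, j).
  + case=> [[p [h ->]] <-]; case: p h => a b /= h; apply: List.in_map.
    by apply/In_mem; rewrite mem_filter h mem_enum.
Qed.

Theorem theorem10 (m : nat) (A B : 'M[bool]_m) :
  (tree_col_equiv A B -> ones A = ones B) /\
  (strict_tree_col_equiv A B -> forall i : 'I_m, row_ones A i = row_ones B i).
Proof.
split.
- move=> e; have := tcount2 A; move/(e 2 _ isT).
  case=> s1 [n1 [<- h1]]; case: (tcount2 B) => s2 [n2 [<- h2]].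
  eapply count_uniq; [exact n1|exact n2|exact h1|exact h2].
- move=> e i; have := trcount2 A i; move/(e 2 _ i isT).
  case=> s1 [n1 [<- h1]]; case: (trcount2 B i) => s2 [n2 [<- h2]].
  eapply count_uniq; [exact n1|exact n2|exact h1|exact h2].
Qed.
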